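(* Let $\ell\ge 3$ be prime. Let $r,s,t$ be positive integers with $\gcd(r,s,t)=1$. Let $q=2k\ell+1$ be a prime (with $k$ a positive integer) that does not divide $r$. Define \[ \mu(\ell,q)=\{\eta^{2\ell}:\eta\in\mathbb{F}_q\}=\{0\}\cup\{\zeta\in\mathbb{F}_q^*:\zeta^k=1\} \] and \[ B(\ell,q)=\left\{\zeta\in\mu(\ell,q): \big((s\zeta+t)/r\big)^{2k}\in\{0,1\}\right\}\subseteq \mathbb{F}_q . \] If $B(\ell,q)=\emptyset$, then the equation $r y_2^\ell-s y_1^{2\ell}=t$ has no solutions in integers $y_1,y_2$. *)

(* Defs.v *)
From HB Require Import structures.
From mathcomp Require Import all_boot all_order all_algebra.
Set Implicit Arguments. Unset Strict Implicit. Unset Printing Implicit Defensive.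
Import Order.TTheory GRing.Theory Num.Theory.
Local Open Scope ring_scope.

Definition mu (l q : nat) : {set 'F_q} :=
  [set eta ^+ (2 * l) | eta in [set: 'F_q]].

Definition B (l q k r s t : nat) : {set 'F_q} :=
  [set zeta in mu l q |
     let w := ((s%:R * zeta + t%:R) / r%:R) ^+ (2 * k) in (w == 0) || (w == 1)].

(* Main.v *)
Require Import Defs.
From HB Require Import structures.
From mathcomp Require Import all_boot all_order all_algebra all_field.
Import Order.TTheory GRing.Theory Num.Theory.
Local Open Scope ring_scope.

Theorem lemma6p1 (l r s t q k : nat) :
  prime l -> (3 <= l)%N ->
  (0 < r)%N -> (0 < s)%N -> (0 < t)%N ->
  gcdn (gcdn r s) t = 1%N ->
  (0 < k)%N -> q = (2 * k * l + 1)%N -> prime q -> ~~ (q %| r)%N ->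
  B l q k r s t = set0 ->
  ~ (exists y1 y2 : int,
       (r%:Z) * y2 ^+ l - (s%:Z) * y1 ^+ (2 * l) = t%:Z).
Proof.
move=> _ _ _ _ _ _ _ hq pq nqr hB [y1 [y2 E]].
pose x1 : 'F_q := y1%:~R. pose x2 : 'F_q := y2%:~R.
have E' : (r%:R : 'F_q) * x2 ^+ l - s%:R * x1 ^+ (2 * l) = t%:R.
  have := congr1 (fun z : int => (z%:~R : 'F_q)) E => /=.
  by rewrite rmorphB !rmorphM !rmorphXn /=.
have rnz : (r%:R : 'F_q) != 0 by rewrite -(dvdn_pcharf (pchar_Fp pq)).
have hmem : x1 ^+ (2 * l) \in B l q k r s t.
  rewrite inE; apply/andP; split; first by apply: imset_f; rewrite inE.
  have -> : (s%:R * x1 ^+ (2 * l) + t%:R) / r%:R = x2 ^+ l.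
    rewrite -E' addrC addrNK mulrC mulKf //.
  rewrite -exprM.
  have n0 : (0 < l * (2 * k))%N.
    by move: (prime_gt1 pq); rewrite hq addn1 ltnS mulnC.
  have [->|nz] := eqVneq x2 0; first by rewrite expr0n eqn0Ngt n0.
  apply/orP; right; apply/eqP.
  have e : #|'F_q| = (l * (2 * k)).+1 by rewrite card_Fp // {1}hq addn1 mulnC.
  have h := expf_card x2; rewrite e exprS in h.
  by apply: (mulfI nz); rewrite mulr1 h.
by rewrite hB inE in hmem.
Qed.
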